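(* Let $K \geq 1$ be an integer. Let $X$ be uniformly distributed on $[0,1)$, and let $K-1$ thresholds be drawn independently of each other and of $X$, each uniformly distributed on $[0,1)$; denote them in ascending order by $a_1 \leq a_2 \leq \cdots \leq a_{K-1}$, and set $a_0 = 0$, $a_K = 1$. Define the lossy encoder $\alpha:[0,1) \to \{1,2,\ldots,K\}$ by $\alpha(x) = k$ for $x \in [a_{k-1}, a_k)$, and the decoder $\beta:\{1,\ldots,K\} \to [0,1)$ by $\beta(k) = \tfrac{1}{2}(a_{k-1}+a_k)$. Then the mean-squared error, averaged over both $X$ and the random thresholds, is $$D = \mathbb{E}\big[(X - \beta(\alpha(X)))^2\big] = \frac{1}{2(K+1)(K+2)}.$$ *)

(* Defs.v *)
From HB Require Import structures.
From mathcomp Require Import all_boot all_order all_algebra.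
From mathcomp Require Import all_classical all_reals all_analysis.
Set Implicit Arguments. Unset Strict Implicit. Unset Printing Implicit Defensive.
Import Order.TTheory GRing.Theory Num.Theory.
Local Open Scope classical_set_scope.
Local Open Scope ring_scope.

Section Quantizer.
Variable R : realType.

Definition thr (ts : seq R) (k : nat) : R :=
  nth 1 (0 :: sort <=%R ts ++ [:: 1]) k.

(* Encoder alpha : [0,1) -> {1..K}, alpha x = k for x in [a_{k-1}, a_k):
   the least k >= 1 with x < a_k (for x in [0,1), a_{k-1} <= x then holds). *)
Definition encoder (ts : seq R) (x : R) : nat :=
  (find (fun a => x < a) (sort <=%R ts ++ [:: 1])).+1.

Definition decoder (ts : seq R) (k : nat) : R :=
  (thr ts k.-1 + thr ts k) / 2.

Definition sq_err (ts : seq R) (x : R) : R :=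
  (x - decoder ts (encoder ts x)) ^+ 2.

(* Expectation over n i.i.d. Uniform[0,1) variables, written as the
   iterated Lebesgue integral over [0,1)^n (equal to the product-measure
   expectation by Fubini). *)
Fixpoint iter_unif_exp (n : nat) (f : seq R -> R) : R :=
  match n with
  | 0 => f [::]
  | n'.+1 => Rintegral lebesgue_measure `[0%R, 1%R[
               (fun t => iter_unif_exp n' (fun s => f (t :: s)))
  end.

Definition distortion (K : nat) : R :=
  Rintegral lebesgue_measure `[0%R, 1%R[
    (fun x => iter_unif_exp K.-1 (fun ts => sq_err ts x)).

End Quantizer.

(* Main.v *)
Require Import Defs.
From HB Require Import structures.
From mathcomp Require Import all_boot all_order all_algebra.
From mathcomp Require Import all_classical all_reals all_analysis.
From mathcomp Require Import ring lra.
Import Order.TTheory GRing.Theory Num.Theory numFieldNormedType.Exports.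
Local Open Scope ring_scope.

Local Open Scope classical_set_scope.
Lemma integrableU d (T : measurableType d) (R : realType) (mu : {measure set T -> \bar R})
  (A B : set T) (f : T -> \bar R) : measurable A -> measurable B ->
  [disjoint A & B] -> mu.-integrable A f -> mu.-integrable B f ->
  mu.-integrable (A `|` B) f.
Proof.
move=> mA mB dAB iA iB.
have /integrableP[maA _] := integrable_abse iA.
have /integrableP[maB _] := integrable_abse iB.
move: iA iB => /integrableP[mfA iA] /integrableP[mfB iB].
have mf := proj2 (measurable_funU (T1:=T) (T2:=measurable_realfun.constructive_ereal_extended__canonical__measurable_structure_SigmaRing R) f mA mB) (conj mfA mfB).
have ma := proj2 (measurable_funU (T1:=T) (T2:=measurable_realfun.constructive_ereal_extended__canonical__measurable_structure_SigmaRing R) (abse \o f) mA mB) (conj maA maB).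
apply/integrableP; split => //.
rewrite ge0_integral_setU //.
- by rewrite lte_add_pinfty.
Qed.
Section An.
Variable R : realType.
Local Notation mu := (@lebesgue_measure R).

Lemma cont_of_der (g : R -> R) : (forall t : R, derivable g t 1) -> continuous g.
Proof.
move=> dg t; apply: differentiable_continuous; exact/derivable1_diffP.
Qed.

Lemma piece (g F : R -> R) (c d : R) (b1 b2 : bool) : c <= d ->
  (forall t : R, is_derive t 1 F (g t)) -> (forall t : R, derivable g t 1) ->
  mu.-integrable [set` Interval (BSide b1 c) (BSide b2 d)] (EFin \o g) /\
  \int[mu]_(t in [set` Interval (BSide b1 c) (BSide b2 d)]) g t = F d - F c.
Proof.
move=> cd dF dg.
have cg := @cont_of_der g dg.
have icc : mu.-integrable `[c, d] (EFin \o g).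
  apply: continuous_compact_integrable; first exact: segment_compact.
  exact: continuous_subspaceT.
have isub b1' b2' : mu.-integrable [set` Interval (BSide b1' c) (BSide b2' d)] (EFin \o g).
  apply: integrableS icc => //; apply: subset_itv; by case: b1'; case: b2'; rewrite bnd_simp.
split; first exact: isub.
have -> : \int[mu]_(t in [set` Interval (BSide b1 c) (BSide b2 d)]) g t =
          \int[mu]_(t in `[c, d]) g t.
  case: b1; case: b2 => //.
  - by rewrite Rintegral_itv_bndo_bndc //; exact: isub.
  - rewrite Rintegral_itv_obnd_cbnd; last exact: (isub false true).
    by rewrite Rintegral_itv_bndo_bndc //; exact: isub.
  - by rewrite Rintegral_itv_obnd_cbnd //; exact: (isub false false).
move: cd; rewrite le_eqVlt => /predU1P[<-|cd].
  by rewrite set_itv1 Rintegral_set1 subrr.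
rewrite /Rintegral (@continuous_FTC2 _ g F) //.
- exact: continuous_subspaceT.
- split.
  + move=> t _; exact: ex_derive.
  + apply: cvg_at_right_filter; apply: (cont_of_der _); move=> t; exact: ex_derive.
  + apply: cvg_at_left_filter; apply: (cont_of_der _); move=> t; exact: ex_derive.
- move=> t _; rewrite derive1E; exact: derive_val.
Qed.

Implicit Types (a b x : R).
Ltac nz n := repeat (apply/andP; split); apply/negP => /eqP; have := ler0n R n; lra.

Definition P n a : R := 2 * (1 - (1 - a)^+n.+1) / n.+1%:R - 2 * (1 - (1 - a)^+n.+2) / n.+2%:R.
Definition Q n a b : R := (1 - (1 - a)^+n.+2 - (1 - b)^+n.+2 + (1 - a - b)^+n.+2) / (n.+1%:R * n.+2%:R).
Definition G n a b : R := (P n a + P n b - 2 * Q n a b) / 4.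
Definition PI n a : R := 2 * (a - (1 - (1-a)^+n.+2)/n.+2%:R)/n.+1%:R - 2 * (a - (1 - (1-a)^+n.+3)/n.+3%:R)/n.+2%:R.
Definition QI n a b : R := (a - (1 - (1-a)^+n.+3)/n.+3%:R - a * (1-b)^+n.+2 + ((1-b)^+n.+3 - (1-a-b)^+n.+3)/n.+3%:R) / (n.+1%:R * n.+2%:R).
Definition GI n a b : R := (PI n a + a * P n b - 2 * QI n a b) / 4.

Lemma G0 a b : G 0 a b = (a - b)^+2 / 4.
Proof. rewrite /G /P /Q. rewrite !exprS !expr0. by field. Qed.

Lemma Gsym n a b : G n a b = G n b a.
Proof. rewrite /G /Q. have -> : 1 - b - a = 1 - a - b by ring. field; nz n. Qed.

Lemma Grec n a b : G n.+1 a b = (1 - a - b) * G n a b + GI n a b + GI n b a.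
Proof.
rewrite /GI /G /P /Q /PI /QI.
have -> : 1 - b - a = 1 - a - b by ring.
rewrite !exprS. field; nz n.
Qed.
Definition isD (f : R -> R) (t d : R) := is_derive t 1 f d.
Lemma d_eq f (t d d' : R) : isD f t d -> d = d' -> is_derive t 1 f d'.
Proof. by move=> h <-. Qed.
Lemma d_cst (c t : R) : isD (fun _ : R => c) t 0.
Proof. exact: is_derive_cst. Qed.
Lemma d_id (t : R) : isD (fun s : R => s) t 1.
Proof. exact: is_derive_id. Qed.
Lemma d_add f g (t df dg : R) : isD f t df -> isD g t dg ->
  isD (fun s => f s + g s) t (df + dg).
Proof. move=> hf hg; exact: (is_deriveD hf hg). Qed.
Lemma d_opp f (t df : R) : isD f t df -> isD (fun s => - f s) t (- df).
Proof. move=> hf; exact: (is_deriveN hf). Qed.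
Lemma d_mul f g (t df dg : R) : isD f t df -> isD g t dg ->
  isD (fun s => f s * g s) t (f t * dg + g t * df).
Proof. move=> hf hg; exact: (is_deriveM hf hg). Qed.
Lemma d_pow f (t df : R) n : isD f t df ->
  isD (fun s => f s ^+ n) t (n%:R * f t ^+ n.-1 * df).
Proof. move=> hf; move: (is_deriveX n hf); rewrite exprfctE => H.
apply: (is_derive_eq H). by []. Qed.

Ltac dtac := first [ eapply d_cst | eapply d_id
  | eapply d_add; [dtac | dtac] | eapply d_opp; dtac
  | eapply d_mul; [dtac | dtac] | eapply d_pow; dtac ].


Lemma dGI2 n x b (t : R) : is_derive t 1 (fun s => - GI n (x - s) b) (G n (x - t) b).
Proof.
rewrite /GI /PI /QI. eapply d_eq; first dtac.
rewrite /G /P /Q /=. rewrite !exprS. field. nz n.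
Qed.
Lemma dGI3 n x a (t : R) : is_derive t 1 (fun s => GI n (s - x) a) (G n (t - x) a).
Proof.
rewrite /GI /PI /QI. eapply d_eq; first dtac.
rewrite /G /P /Q /=. rewrite !exprS. field. nz n.
Qed.
Definition H n x : R := (PI n x - PI n (1 - x) - 2 * (x + (1 - x)^+n.+3/n.+3%:R - x^+n.+3/n.+3%:R)/(n.+1%:R * n.+2%:R))/4.
Lemma dH n (t : R) : is_derive t 1 (H n) (G n t (1 - t)).
Proof.
rewrite /H /PI. eapply d_eq; first dtac.
rewrite /G /P /Q /=.
have -> : 1 - t - (1 - t) = 0 by ring.
have -> : 1 - (1 - t) = t by ring.
rewrite !exprS !expr0n /=. field; nz n.
Qed.
Lemma Hval n : H n 1 - H n 0 = (2 * n.+2%:R * n.+3%:R)^-1.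
Proof.
rewrite /H /PI. rewrite !subrr !subr0 !expr0n !expr1n ?subrr ?expr0n /=. field; nz n.
Qed.

End An.


Ltac nz2 n := rewrite ?mulf_eq0 ?negb_or; repeat (apply/andP; split); apply/negP => /eqP; have := ler0n R n; lra.
Ltac dtac2 := first [ eapply d_cst | eapply d_id
  | eapply d_add; [dtac2 | dtac2] | eapply d_opp; dtac2
  | eapply d_mul; [dtac2 | dtac2] | eapply d_pow; dtac2 ].
Arguments isD {R}.
Arguments G {R}.
Arguments GI {R}.
Arguments P {R}.
Arguments Q {R}.
Arguments PI {R}.
Arguments QI {R}.
Arguments H {R}.
Arguments dGI2 {R}.
Arguments dGI3 {R}.
Arguments dH {R}.
Arguments Grec {R}.
Arguments Gsym {R}.
Section St.
Variable R : realType.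
Local Notation mu := (@lebesgue_measure R).

Lemma isD_derivable (f : R -> R) (t d : R) : isD f t d -> derivable f t 1.
Proof. rewrite /isD => h; exact: ex_derive. Qed.

Lemma piece_eq (phi g F : R -> R) (c d : R) (b1 b2 : bool) : c <= d ->
  (forall t : R, is_derive t 1 F (g t)) -> (forall t : R, derivable g t 1) ->
  {in [set` Interval (BSide b1 c) (BSide b2 d)], phi =1 g} ->
  mu.-integrable [set` Interval (BSide b1 c) (BSide b2 d)] (EFin \o phi) /\
  \int[mu]_(t in [set` Interval (BSide b1 c) (BSide b2 d)]) phi t = F d - F c.
Proof.
move=> cd dF dg e.
have [ig vg] := @piece R g F c d b1 b2 cd dF dg.
split.
  apply: eq_integrable ig => // t tD /=; by rewrite e.
by rewrite -vg; apply: eq_Rintegral.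
Qed.

Definition phi n x l u (t : R) : R :=
  if t <= x then G n (x - Num.max l t) (u - x) else G n (x - l) (Num.min u t - x).

Ltac dj := rewrite disj_set2E; apply/eqP; rewrite -subset0 => tt [] /=; rewrite !in_itv /= => /andP[hh1 hh2] /andP[hh3 hh4]; lra.

Lemma step n (x l u : R) : 0 <= l -> l <= x -> x < u -> u <= 1 ->
  \int[mu]_(t in `[0, 1[) phi n x l u t = G n.+1 (x - l) (u - x).
Proof.
move=> l0 lx xu u1.
set a := x - l; set b := u - x.
have dC (t : R) : is_derive t 1 (fun t => t * G n a b) (G n a b).
  by eapply d_eq; [dtac2|]; rewrite mulr0 add0r mulr1.
have gC (t : R) : derivable (fun _ : R => G n a b) t 1.
  by eapply isD_derivable; dtac2.
have g2 (t : R) : derivable (fun t => G n (x - t) b) t 1.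
  by eapply isD_derivable; rewrite /G /P /Q; dtac2.
have g3 (t : R) : derivable (fun t => G n (t - x) a) t 1.
  by eapply isD_derivable; rewrite /G /P /Q; dtac2.
have e1 : {in `[0, l], phi n x l u =1 (fun _ => G n a b)}.
  move=> t /set_mem /=; rewrite in_itv /= => /andP[h1 h2].
  rewrite /phi ifT; last exact: le_trans h2 lx.
  by rewrite max_l.
have e2 : {in `]l, x], phi n x l u =1 (fun t => G n (x - t) b)}.
  move=> t /set_mem /=; rewrite in_itv /= => /andP[h1 h2].
  by rewrite /phi ifT // max_r // ltW.
have e3 : {in `]x, u[, phi n x l u =1 (fun t => G n (t - x) a)}.
  move=> t /set_mem /=; rewrite in_itv /= => /andP[h1 h2].
  rewrite /phi ifF; last by apply/negbTE; rewrite -ltNge.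
  by rewrite min_r ?ltW // Gsym.
have e4 : {in `[u, 1[, phi n x l u =1 (fun _ => G n a b)}.
  move=> t /set_mem /=; rewrite in_itv /= => /andP[h1 h2].
  rewrite /phi ifF ?min_l //; apply/negbTE; rewrite -ltNge; exact: lt_le_trans h1.
have [i1 v1] := @piece_eq (phi n x l u) _ _ 0 l true false l0 dC gC e1.
have [i2 v2] := @piece_eq (phi n x l u) _ _ l x false false lx (dGI2 n x b) g2 e2.
have [i3 v3] := @piece_eq (phi n x l u) _ _ x u false true (ltW xu) (dGI3 n x a) g3 e3.
have [i4 v4] := @piece_eq (phi n x l u) _ _ u 1 true true u1 dC gC e4.
have s1 : `[0, 1[ = `[0, l] `|` `]l, 1[ :> set R.
  by apply: itv_bndbnd_setU; rewrite bnd_simp; lra.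
have s2 : `]l, 1[ = `]l, x] `|` `]x, 1[ :> set R.
  by apply: itv_bndbnd_setU; rewrite bnd_simp; lra.
have s3 : `]x, 1[ = `]x, u[ `|` `[u, 1[ :> set R.
  by apply: itv_bndbnd_setU; rewrite bnd_simp; lra.
have d3 : [disjoint `]x, u[ & `[u, 1[] by dj.
have d2 : [disjoint `]l, x] & `]x, 1[] by dj.
have d1 : [disjoint `[0, l] & `]l, 1[] by dj.
have i34 : mu.-integrable `]x, 1[ (EFin \o phi n x l u).
  by rewrite s3; apply: integrableU => //.
have i234 : mu.-integrable `]l, 1[ (EFin \o phi n x l u).
  by rewrite s2; apply: integrableU => //.
have i1234 : mu.-integrable `[0, 1[ (EFin \o phi n x l u).
  by rewrite s1; apply: integrableU => //.
rewrite s1 Rintegral_setU //; last by rewrite -s1.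
rewrite s2 Rintegral_setU //; last by rewrite -s2.
rewrite s3 Rintegral_setU //; last by rewrite -s3.
rewrite v1 v2 v3 v4 Grec !subrr.
have GI0 (c : R) : GI n 0 c = 0 by rewrite /GI /PI /QI !subr0 !expr1n !subrr; field; nz2 n.
rewrite !GI0 /a /b. ring.
Qed.



End St.

Section C.
Variable R : realType.
Implicit Types (x c y u : R) (s r : seq R).

Definition lo x c s := \big[Num.max/c]_(t <- s | t <= x) t.
Definition hi x c s := \big[Num.min/c]_(t <- s | x < t) t.

Lemma lo_max x y c s : lo x (Num.max y c) s = Num.max y (lo x c s).
Proof.
rewrite /lo; elim: s => [|t s IH]; first by rewrite !big_nil.
rewrite !big_cons IH; case: ifP => // _.
by rewrite maxCA.
Qed.

Lemma hi_min x y c s : hi x (Num.min y c) s = Num.min y (hi x c s).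
Proof.
rewrite /hi; elim: s => [|t s IH]; first by rewrite !big_nil.
rewrite !big_cons IH; case: ifP => // _.
by rewrite minCA.
Qed.

Lemma lo_cons x c t s :
  lo x c (t :: s) = lo x (if t <= x then Num.max c t else c) s.
Proof.
rewrite {1}/lo big_cons; case: ifP => // _.
by rewrite (maxC c t) lo_max.
Qed.

Lemma hi_cons x c t s :
  hi x c (t :: s) = hi x (if x < t then Num.min c t else c) s.
Proof.
rewrite {1}/hi big_cons; case: ifP => // _.
by rewrite (minC c t) hi_min.
Qed.

Lemma lo_none x c s : all (fun t => x < t) s -> lo x c s = c.
Proof.
rewrite /lo; elim: s => [|t s IH]; first by rewrite big_nil.
rewrite big_cons /= => /andP[xt /IH ->]; by rewrite leNgt xt.
Qed.

Lemma hi_ge x y u s : y <= u -> all (fun t => y <= t) s -> y <= hi x u s.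
Proof.
rewrite /hi => yu; elim: s => [|t s IH]; first by rewrite big_nil.
rewrite big_cons /= => /andP[yt /IH h]; case: ifP => // _.
by rewrite le_min yt h.
Qed.

Lemma key x s c : x < 1 -> sorted <=%R s -> c <= x -> all (fun t => c <= t) s ->
  all (fun t => t < 1) s ->
  nth 1 (c :: s ++ [:: 1]) (find (fun a => x < a) (s ++ [:: 1])) = lo x c s /\
  nth 1 (s ++ [:: 1]) (find (fun a => x < a) (s ++ [:: 1])) = hi x 1 s.
Proof.
move=> x1; elim: s c => [|y s IH] c.
  by move=> _ _ _ _ /=; rewrite x1 /lo /hi !big_nil.
move=> /= pys cx /andP[cy cs] /andP[y1 s1].
have ys : all (fun t => y <= t) s.
  by have := order_path_min (@le_trans _ R) pys.
have ss : sorted <=%R s := path_sorted pys.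
case: (ltP x y) => xy /=.
  split.
    rewrite lo_cons ifF; last by rewrite leNgt xy.
    rewrite lo_none //; apply/allP => t ts.
    by apply: lt_le_trans xy _; move/allP: ys => /(_ t ts).
  rewrite hi_cons ifT // (minC 1 y) hi_min min_l //.
  by apply: hi_ge => //; exact: ltW.
have [IH1 IH2] := IH y ss xy ys s1.
split.
  by rewrite IH1 lo_cons xy max_r.
by rewrite IH2 hi_cons ifF // ltNge xy.
Qed.

Definition herr x l u : R := (x - (l + u) / 2) ^+ 2.

Lemma sq_errE x ts : 0 <= x -> x < 1 -> all (fun t => (0 <= t) && (t < 1)) ts ->
  sq_err ts x = herr x (lo x 0 ts) (hi x 1 ts).
Proof.
move=> x0 x1 hts.
set r := sort <=%R ts.
have pr : perm_eq r ts by rewrite /r perm_sort.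
have sr : sorted <=%R r by apply: sort_sorted; exact: le_total.
have ar : all (fun t => (0 <= t) && (t < 1)) r by rewrite (perm_all _ pr).
have a0 : all (fun t => 0 <= t) r.
  by apply/allP => t /(allP ar) /andP[].
have a1 : all (fun t => t < 1) r.
  by apply/allP => t /(allP ar) /andP[].
have [k1 k2] := @key x r 0 x1 sr x0 a0 a1.
have -> : lo x 0 ts = lo x 0 r by rewrite /lo (perm_big _ pr).
have -> : hi x 1 ts = hi x 1 r by rewrite /hi (perm_big _ pr).
rewrite /sq_err /decoder /encoder /thr /= -/r.
by rewrite k1 k2.
Qed.
End C.


Arguments G {R}. Arguments H {R}. Arguments G0 {R}. Arguments dH {R}.
Arguments herr {R}. Arguments lo {R}. Arguments hi {R}. Arguments lo_cons {R}. Arguments hi_cons {R}. Arguments step {R}. Arguments phi {R}. Arguments sq_errE {R}. Arguments isD_derivable {R}. Arguments Hval {R}. Arguments P {R}. Arguments Q {R}.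

Section M.
Variable R : realType.

Lemma iter_congr n (f g : seq R -> R) :
  (forall s, all (fun t => (0 <= t) && (t < 1)) s -> f s = g s) ->
  iter_unif_exp n f = iter_unif_exp n g.
Proof.
elim: n f g => [|n IH] f g fg /=; first exact: fg.
apply: eq_Rintegral => t /set_mem /=; rewrite in_itv /= => ht.
by apply: IH => s hs; apply: fg; rewrite /= ht hs.
Qed.

Lemma mainM n (x : R) : forall l u, 0 <= l -> l <= x -> x < u -> u <= 1 ->
  iter_unif_exp n (fun s => herr x (lo x l s) (hi x u s)) = G n (x - l) (u - x).
Proof.
elim: n => [|n IH] l u l0 lx xu u1.
  rewrite /= /herr /lo /hi !big_nil G0. by field.
rewrite /= -(step n x l u l0 lx xu u1).
apply: eq_Rintegral => t /set_mem /=; rewrite in_itv /= => /andP[t0 t1].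
rewrite /phi; case: ifP => tx.
  have -> : (fun s => herr x (lo x l (t :: s)) (hi x u (t :: s))) =
            (fun s => herr x (lo x (Num.max l t) s) (hi x u s)).
    by apply/funext => s; rewrite lo_cons hi_cons tx ifF // ltNge tx.
  apply: IH => //; first by rewrite le_max l0.
  by rewrite ge_max lx tx.
have xt : x < t by rewrite ltNge tx.
have -> : (fun s => herr x (lo x l (t :: s)) (hi x u (t :: s))) =
          (fun s => herr x (lo x l s) (hi x (Num.min u t) s)).
  by apply/funext => s; rewrite lo_cons hi_cons tx xt.
apply: IH => //; first by rewrite lt_min xu xt.
by rewrite ge_min u1.
Qed.
End M.

Theorem theorem1 (R : realType) (K : nat) (hK : (1 <= K)%N) :
  distortion R K = (2 * (K.+1)%:R * (K.+2)%:R)^-1.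
Proof.
case: K hK => // k _.
rewrite /distortion /=.
transitivity (\int[lebesgue_measure]_(x in `[0, 1[) G k x (1 - x) : R).
  apply: eq_Rintegral => x /set_mem /=; rewrite in_itv /= => /andP[x0 x1].
  rewrite (@iter_congr R k _ (fun ts => herr x (lo x 0 ts) (hi x 1 ts))); last first.
    by move=> s hs; exact: sq_errE.
  by rewrite mainM // subr0.
have dg : forall t : R, derivable (fun x => G k x (1 - x)) t 1.
  by move=> t; eapply isD_derivable; rewrite /G /P /Q; dtac2.
have [_ ->] := @piece R (fun x => G k x (1 - x)) (H k) 0 1 true true ler01 (dH k) dg.
exact: Hval.
Qed.
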